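(* Let $\beta>2\alpha>0$ with $\beta+2\alpha>1$, assume $s_N=o\big(\sqrt N/\log N\big)$ and let $0<r<m^*$. Then there exists $\rho>0$ (depending on $r$ but not on $N$) such that $$\inf_{x\in\Delta_N^r}\varphi_N\Big(\sqrt{\tfrac{s_N}{N}}x\Big)\ge\varphi_N(\overrightarrow{m}^* )+\rho.$$
   Context: $A=\beta I+\alpha(P+P^T)$ is the $s_N\times s_N$ symmetric circulant matrix ($P$ the cyclic shift), $e_k$ the standard basis of $\mathbb{R}^{s_N}$, $\varphi_N(x)=\frac12x^TAx-\sum_{k=1}^{s_N}\log\cosh(x^TAe_k)$. $m^*$ is the largest solution of $x=\tanh((\beta+2\alpha)x)$ and $\overrightarrow{m}^*=(m^*,\dots,m^* )\in\mathbb{R}^{s_N}$. Let $\lambda_{\min},\lambda_{\max}$ be the smallest and largest eigenvalues of $A$, fix $R>2\lambda_{\max}/\lambda_{\min}$, let $B_{R\sqrt N}$ be the centered Euclidean ball of radius $R\sqrt N$ in $\mathbb{R}^{s_N}$, and $$\Delta_N^r=B_{R\sqrt N}\setminus\Big(\Big[\sqrt{\tfrac{N}{s_N}}(m^*-r),\sqrt{\tfrac{N}{s_N}}(m^*+r)\Big]^{s_N}\cup\Big[\sqrt{\tfrac{N}{s_N}}(-m^*-r),\sqrt{\tfrac{N}{s_N}}(-m^*+r)\Big]^{s_N}\Big).$$ *)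

(* Defs.v *)
From mathcomp Require Import all_boot all_order all_algebra.
From mathcomp Require Import all_classical all_reals all_analysis.
Set Implicit Arguments. Unset Strict Implicit. Unset Printing Implicit Defensive.
Import Order.TTheory GRing.Theory Num.Theory.
Local Open Scope ring_scope.

Section Defs.
Variable R : realType.

Definition coshR (x : R) : R := (expR x + expR (- x)) / 2.
Definition tanhR (x : R) : R := (expR x - expR (- x)) / (expR x + expR (- x)).

Definition cshift (n : nat) : 'M[R]_n :=
  \matrix_(i < n, j < n) (((i.+1 %% n)%N == j)%:R : R).

Definition Amat (n : nat) (alpha beta : R) : 'M[R]_n :=
  beta%:M + alpha *: (cshift n + (cshift n)^T).

Definition ebasis (n : nat) (k : 'I_n) : 'rV[R]_n := \row_j ((j == k)%:R : R).

Definition qform (n : nat) (A : 'M[R]_n) (x y : 'rV[R]_n) : R :=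
  (x *m A *m y^T) 0 0.

Definition phiN (n : nat) (alpha beta : R) (x : 'rV[R]_n) : R :=
  qform (Amat n alpha beta) x x / 2
  - \sum_(k < n) ln (coshR (qform (Amat n alpha beta) x (ebasis k))).

Definition is_mstar (alpha beta m : R) : Prop :=
  m = tanhR ((beta + 2 * alpha) * m) /\
  forall y : R, y = tanhR ((beta + 2 * alpha) * y) -> y <= m.

Definition is_min_eig (n : nat) (A : 'M[R]_n) (l : R) : Prop :=
  eigenvalue A l /\ forall a, eigenvalue A a -> l <= a.
Definition is_max_eig (n : nat) (A : 'M[R]_n) (l : R) : Prop :=
  eigenvalue A l /\ forall a, eigenvalue A a -> a <= l.

Definition const_vec (n : nat) (c : R) : 'rV[R]_n := \row_j c.

Definition in_ball (n : nat) (rad : R) (x : 'rV[R]_n) : Prop :=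
  Num.sqrt (\sum_(i < n) x 0 i ^+ 2) <= rad.

Definition in_cube (n : nat) (a b : R) (x : 'rV[R]_n) : Prop :=
  forall i, a <= x 0 i <= b.

(* Delta_N^r, with n = s_N *)
Definition DeltaNr (N n : nat) (Rad m r : R) (x : 'rV[R]_n) : Prop :=
  let c := Num.sqrt (N%:R / n%:R) in
  in_ball (Rad * Num.sqrt N%:R) x /\
  ~ (in_cube (c * (m - r)) (c * (m + r)) x \/
     in_cube (c * (- m - r)) (c * (- m + r)) x).

End Defs.

(* Main.v *)
Require Import Defs.
From mathcomp Require Import all_boot all_order all_algebra.
From mathcomp Require Import all_classical all_reals all_analysis.
From mathcomp Require Import ring lra.
Import Order.TTheory GRing.Theory Num.Theory.
Local Open Scope ring_scope.
Set Implicit Arguments. Unset Strict Implicit.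
Section S.
Variable R : realType.
Implicit Types x w : R.

Lemma isd (f g : R -> R) x d e : is_derive x 1 f d -> f = g -> d = e -> is_derive x 1 g e.
Proof. by move=> H <- <-. Qed.

Lemma dexpN x : is_derive x 1 (fun w : R => expR (- w)) (- expR (- x)).
Proof.
have := @is_derive1_comp R expR (-%R) x (expR (- x)) (-1) _ _.
rewrite mulrN1. apply.
Qed.

Lemma cosh_gt0 x : 0 < coshR x.
Proof. rewrite /coshR; apply: divr_gt0 => //; apply: addr_gt0; exact: expR_gt0. Qed.

Lemma dcosh x : is_derive x 1 (@coshR R) ((expR x - expR (- x)) / 2).
Proof.
have H := is_deriveD (is_derive_expR x) (dexpN x).
have H2 := is_deriveM H (is_derive_cst (2^-1 : R) x 1).
apply: (isd H2); first by apply/funext => w.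
by rewrite /= scaler0 add0r /GRing.scale /= mulrC.
Qed.

Lemma dlncosh x : is_derive x 1 (fun w => ln (coshR w)) (tanhR x).
Proof.
have H := @is_derive1_comp R (@ln R) (@coshR R) x _ _ (is_derive1_ln (cosh_gt0 x)) (dcosh x).
apply: (isd H) => //.
rewrite /tanhR /coshR; set E := expR x; set F := expR (-x).
have E0 : 0 < E by apply: expR_gt0.
have F0 : 0 < F by apply: expR_gt0.
field. by rewrite gt_eqF //; lra.
Qed.

Lemma dtanh x : is_derive x 1 (@tanhR R) (1 - tanhR x ^+ 2).
Proof.
have HN := is_deriveB (is_derive_expR x) (dexpN x).
have HD := is_deriveD (is_derive_expR x) (dexpN x).
have E0 : 0 < expR x by apply: expR_gt0.
have F0 : 0 < expR (- x) by apply: expR_gt0.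
have HV := @is_deriveV R _ x _ _ _ HD.
have HM := is_deriveM HN (HV _).
have Hne : (expR + (fun w => expR (- w))) x != 0 by apply: lt0r_neq0; apply: addr_gt0; exact: expR_gt0.
apply: (isd (HM Hne)); first by apply/funext => w.
rewrite /tanhR /=  /GRing.scale /=; set E := expR x; set F := expR (-x).
have -> : (expR + (fun w => expR (- w))) x = E + F by [].
have -> : (expR - (fun w => expR (- w))) x = E - F by [].
have E1 : 0 < E by apply: expR_gt0.
have F1 : 0 < F by apply: expR_gt0.
field. by rewrite gt_eqF //; lra.
Qed.


Definition Kf (b w : R) := w * tanhR w - ln (coshR w) - b / 2 * tanhR w ^+ 2.

Lemma dK b x : is_derive x 1 (Kf b) ((1 - tanhR x ^+ 2) * (x - b * tanhR x)).
Proof.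
have H1 := is_deriveM (is_derive_id x 1) (dtanh x).
have H2 := is_deriveB H1 (dlncosh x).
have H3 := is_deriveX 2 (dtanh x).
have H4 := is_deriveM (is_derive_cst (b / 2) x 1) H3.
have H5 := is_deriveB H2 H4.
apply: (isd H5); first by apply/funext => w.
rewrite /= /GRing.scale /=. rewrite mulr0 addr0 expr1 mulr1. set t := tanhR x. by field.
Qed.

Lemma mvt (f df : R -> R) a b : (forall x, is_derive x 1 f (df x)) -> a < b ->
  exists2 c, a < c < b & f b - f a = df c * (b - a).
Proof.
move=> Hd ab.
have Hd' : forall x, x \in `]a, b[%R -> is_derive x 1 f (df x) by move=> x _; exact: Hd.
case: (MVT ab Hd').
  apply: derivable_within_continuous => x _.
  by case: (Hd x).
move=> c cab E.
by exists c => //; move: cab; rewrite in_itv.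
Qed.

Lemma tanhN x : tanhR (- x) = - tanhR x.
Proof. rewrite /tanhR opprK; set E := expR x; set F := expR (-x).
rewrite (addrC F) -mulNr; congr (_ / _); ring. Qed.

Lemma coshN x : coshR (- x) = coshR x.
Proof. by rewrite /coshR opprK addrC. Qed.

Lemma KN b x : Kf b (- x) = Kf b x.
Proof. by rewrite /Kf tanhN coshN sqrrN mulNr mulrN opprK. Qed.

Lemma tanh_sq_lt1 x : tanhR x ^+ 2 < 1.
Proof.
rewrite /tanhR; have E0 : 0 < expR x := expR_gt0 x.
have F0 : 0 < expR (- x) := expR_gt0 (- x).
set E := expR x in E0 *; set F := expR (-x) in F0 *.
rewrite expr_div_n ltr_pdivrMr; last by apply: exprn_gt0; lra.
rewrite mul1r; nra.
Qed.

Lemma tanh_ge0 x : 0 <= x -> 0 <= tanhR x.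
Proof.
move=> x0; rewrite /tanhR; apply: divr_ge0; last first.
  by apply: addr_ge0; apply: ltW; apply: expR_gt0.
by rewrite subr_ge0 ler_expR; lra.
Qed.

Lemma tanh_incr x y : x < y -> tanhR x < tanhR y.
Proof.
move=> xy; have [c _ E] := mvt dtanh xy.
rewrite -subr_gt0 E; apply: mulr_gt0; last by rewrite subr_gt0.
by rewrite subr_gt0 tanh_sq_lt1.
Qed.

Lemma tanh_lip x y : `|tanhR x - tanhR y| <= `|x - y|.
Proof.
wlog xy : x y / x <= y.
  move=> W; case/orP: (le_total x y) => [/W //|/W h]; by rewrite distrC [X in _ <= X]distrC.
case: (boolP (x < y)) => [lt|ge]; last first.
  have -> : x = y by apply/le_anti; rewrite xy leNgt ge.
  by rewrite !subrr normr0.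
have [c _ E] := mvt dtanh lt.
rewrite distrC [`|x - y|]distrC E normrM ler_piMl //.
have h := tanh_sq_lt1 c; have h2 : 0 <= tanhR c ^+ 2 := sqr_ge0 _.
by rewrite ger0_norm; lra.
Qed.


Lemma tanh0 : tanhR (0 : R) = 0.
Proof. by rewrite /tanhR oppr0 subrr mul0r. Qed.

Definition gf (b w : R) := w - b * tanhR w.
Definition dgf (b w : R) := 1 - b * (1 - tanhR w ^+ 2).

Lemma dg b x : is_derive x 1 (gf b) (dgf b x).
Proof.
have H1 := is_deriveB (is_derive_id x 1) (is_deriveM (is_derive_cst b x 1) (dtanh x)).
apply: (isd H1); first by apply/funext => w.
by rewrite /dgf /= /GRing.scale /= mulr0 addr0.
Qed.

Lemma dg_incr b x y : 0 < b -> 0 <= x -> x < y -> dgf b x < dgf b y.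
Proof.
move=> b0 x0 xy; rewrite /dgf.
have tx := tanh_ge0 x0; have txy := tanh_incr xy.
have : tanhR x ^+ 2 < tanhR y ^+ 2 by nra.
nra.
Qed.

Lemma g_neg b ws w : 0 < b -> gf b ws = 0 -> 0 < w -> w < ws -> gf b w < 0.
Proof.
move=> b0 gs w0 wws; rewrite ltNge; apply/negP => gw.
have [c1 /andP[c10 c1w] E1] := mvt (dg b) w0.
have [c2 /andP[c2w c2s] E2] := mvt (dg b) wws.
have g00 : gf b 0 = 0 by rewrite /gf tanh0 mulr0 subr0.
rewrite g00 !subr0 in E1; rewrite gs sub0r in E2.
have h := dg_incr b0 (ltW c10) (lt_trans c1w c2w).
have h1 : 0 <= dgf b c1.
  by rewrite -(pmulr_rge0 _ w0) mulrC -E1.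
have h2 : dgf b c2 <= 0.
  have : 0 < ws - w by rewrite subr_gt0.
  move=> p; rewrite -(pmulr_rle0 _ p) mulrC -E2; lra.
lra.
Qed.

Lemma g_pos b ws w : 0 < b -> gf b ws = 0 -> 0 < ws -> ws < w -> 0 < gf b w.
Proof.
move=> b0 gs s0 wws; rewrite ltNge; apply/negP => gw.
have [c1 /andP[c10 c1w] E1] := mvt (dg b) s0.
have [c2 /andP[c2w c2s] E2] := mvt (dg b) wws.
have g00 : gf b 0 = 0 by rewrite /gf tanh0 mulr0 subr0.
rewrite g00 gs !subr0 in E1; rewrite gs subr0 in E2.
have h := dg_incr b0 (ltW c10) (lt_trans c1w c2w).
have h1 : dgf b c1 = 0.
  have /eqP : dgf b c1 * ws = 0 by rewrite -E1.
  by rewrite mulf_eq0 => /orP[/eqP //|]; rewrite gt_eqF.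
have h2 : dgf b c2 <= 0.
  have : 0 < w - ws by rewrite subr_gt0.
  move=> p; rewrite -(pmulr_rle0 _ p) mulrC -E2; lra.
lra.
Qed.


Lemma K_abs b w : Kf b `|w| = Kf b w.
Proof. by case: (ger0P w) => // _; rewrite KN. Qed.

Lemma sech_gt0 x : 0 < 1 - tanhR x ^+ 2.
Proof. by rewrite subr_gt0 tanh_sq_lt1. Qed.

Lemma K_le_dec b ws x y : 0 < b -> gf b ws = 0 -> 0 <= x -> x <= y -> y <= ws ->
  Kf b y <= Kf b x.
Proof.
move=> b0 gs x0 xy yws.
case: (boolP (x < y)) => [lt|ge]; last first.
  by have -> : x = y by apply/le_anti; rewrite xy leNgt ge.
have [c /andP[xc cy] E] := mvt (dK b) lt.
rewrite -subr_le0 E; apply: mulr_le0_ge0; last by rewrite subr_ge0 ltW.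
apply: mulr_ge0_le0; first exact: ltW (sech_gt0 c).
apply: ltW; apply: (g_neg b0 gs); [exact: le_lt_trans xc| exact: lt_le_trans yws].
Qed.

Lemma K_le_inc b ws x y : 0 < b -> gf b ws = 0 -> 0 < ws -> ws <= x -> x <= y ->
  Kf b x <= Kf b y.
Proof.
move=> b0 gs s0 wx xy.
case: (boolP (x < y)) => [lt|ge]; last first.
  by have -> : x = y by apply/le_anti; rewrite xy leNgt ge.
have [c /andP[xc cy] E] := mvt (dK b) lt.
rewrite -subr_ge0 E; apply: mulr_ge0; last by rewrite subr_ge0 ltW.
apply: mulr_ge0; first exact: ltW (sech_gt0 c).
apply: ltW; apply: (g_pos b0 gs s0); exact: le_lt_trans xc.
Qed.

Lemma K_lt_dec b ws x : 0 < b -> gf b ws = 0 -> 0 <= x -> x < ws -> Kf b ws < Kf b x.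
Proof.
move=> b0 gs x0 lt.
have [c /andP[xc cy] E] := mvt (dK b) lt.
rewrite -subr_lt0 E pmulr_llt0 ?subr_gt0 // pmulr_rlt0 ?sech_gt0 //.
apply: (g_neg b0 gs); [exact: le_lt_trans xc| exact: cy].
Qed.

Lemma K_lt_inc b ws x : 0 < b -> gf b ws = 0 -> 0 < ws -> ws < x -> Kf b ws < Kf b x.
Proof.
move=> b0 gs s0 lt.
have [c /andP[xc cy] E] := mvt (dK b) lt.
rewrite -subr_gt0 E; apply: mulr_gt0; last by rewrite subr_gt0.
apply: mulr_gt0; first exact: sech_gt0 c.
exact: (g_pos b0 gs s0).
Qed.

Lemma K_min b ws w : 0 < b -> gf b ws = 0 -> 0 < ws -> Kf b ws <= Kf b w.
Proof.
move=> b0 gs s0; rewrite -[Kf b w]K_abs.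
case: (ltgtP `|w| ws) => [lt|gt|->] //.
  by apply: ltW; apply: K_lt_dec.
by apply: ltW; apply: K_lt_inc.
Qed.

Lemma K_gap b ws d : 0 < b -> gf b ws = 0 -> 0 < d -> d < ws ->
  exists2 del, 0 < del & forall w, d <= `| `|w| - ws | -> Kf b ws + del <= Kf b w.
Proof.
move=> b0 gs d0 dws.
have s0 : 0 < ws by apply: lt_trans dws.
have h1 := K_lt_dec b0 gs (x := ws - d) ltac:(lra) ltac:(lra).
have h2 := K_lt_inc b0 gs s0 (x := ws + d) ltac:(lra).
exists (Num.min (Kf b (ws - d) - Kf b ws) (Kf b (ws + d) - Kf b ws)).
  by rewrite lt_min !subr_gt0 h1 h2.
move=> w; rewrite -[Kf b w]K_abs; set a := `|w|; have a0 : 0 <= a by apply: normr_ge0.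
case: (boolP (ws <= a)) => [wa|].
  rewrite ger0_norm ?subr_ge0 // => da.
  have h := K_le_inc b0 gs s0 (x := ws + d) (y := a) ltac:(lra) ltac:(lra).
  apply: le_trans (_ : Kf b ws + (Kf b (ws + d) - Kf b ws) <= _).
    by rewrite lerD2l ge_min lexx orbT.
  by rewrite addrC subrK.
rewrite -ltNge => aw.
rewrite ltr0_norm ?subr_lt0 // opprB => da.
have h := K_le_dec b0 gs (x := a) (y := ws - d) a0 ltac:(lra) ltac:(lra).
apply: le_trans (_ : Kf b ws + (Kf b (ws - d) - Kf b ws) <= _).
  by rewrite lerD2l ge_min lexx.
by rewrite addrC subrK.
Qed.

End S.

Section M.
Variable R : realType.
Variable n : nat.

Lemma sumS (F : 'I_n -> R) : \sum_i F (ordS i) = \sum_i F i.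
Proof. by rewrite [RHS](reindex_inj (@ordS_inj n)). Qed.

Lemma sum_delta (F : 'I_n -> R) a : \sum_k ((a == k)%:R * F k) = F a.
Proof.
rewrite (bigD1 a) //= eqxx mul1r big1 ?addr0 // => k /negbTE.
by rewrite eq_sym => ->; rewrite mul0r.
Qed.

Lemma sum_delta' (F : 'I_n -> R) a : \sum_k (F k * (a == k)%:R) = F a.
Proof. rewrite -[RHS](sum_delta F); apply: eq_bigr => k _; exact: mulrC. Qed.

Lemma qformE (A : 'M[R]_n) x z : qform A x z = \sum_k (x *m A) 0 k * z 0 k.
Proof. rewrite /qform [in LHS]mxE; apply: eq_bigr => k _; rewrite [z^T _ _]mxE. done. Qed.

Lemma AmatE (a b : R) j k : Amat n a b j k =
  b * (j == k)%:R + a * (ordS j == k)%:R + a * (ordS k == j)%:R.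
Proof.
by rewrite /Amat /cshift !mxE mulr_natr mulrDr addrA.
Qed.

Lemma qformA (a b : R) x z : qform (Amat n a b) x z =
  \sum_i (b * x 0 i * z 0 i + a * x 0 i * z 0 (ordS i) + a * x 0 (ordS i) * z 0 i).
Proof.
rewrite /qform mxE.
under eq_bigr => k _ do rewrite mxE big_distrl /=.
transitivity (\sum_j \sum_i (b * x 0 i * z 0 j * (i == j)%:R)
  + \sum_j \sum_i (a * x 0 i * z 0 j * (ordS i == j)%:R)
  + \sum_j \sum_i (a * x 0 i * z 0 j * (ordS j == i)%:R)).
  rewrite -!big_split; apply: eq_bigr => j _ /=; rewrite -!big_split; apply: eq_bigr => i _ /=.
  rewrite AmatE mxE; ring.
rewrite [X in _ + X + _]exchange_big /= !big_split /=.
congr (_ + _ + _); apply: eq_bigr => i _.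
- rewrite -[RHS](sum_delta' (fun k => b * x 0 k * z 0 i) i).
  by apply: eq_bigr => k _; rewrite eq_sym.
- by rewrite -[RHS](sum_delta' (fun k => a * x 0 i * z 0 k)).
- by rewrite -[RHS](sum_delta' (fun k => a * x 0 k * z 0 i)).
Qed.



Lemma sum_deltaR (F : 'I_n -> R) a : \sum_k (F k * (k == a)%:R) = F a.
Proof. rewrite -[RHS](sum_delta' F); apply: eq_bigr => k _; by rewrite eq_sym. Qed.

Variables (a b : R).
Implicit Types (y z : 'rV[R]_n) (k : 'I_n).
Definition uu (y : 'rV[R]_n) k := qform (Amat n a b) y (ebasis R k).
Definition tt y k := tanhR (uu y k).
Definition vv y k := y 0 k - tt y k.

Lemma uuE y k : uu y k = (y *m Amat n a b) 0 k.
Proof.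
rewrite /uu qformE -[RHS](sum_deltaR (fun j => (y *m Amat n a b) 0 j) k).
by apply: eq_bigr => j _; rewrite !mxE.
Qed.

Lemma sum_ut y z : \sum_k uu y k * z 0 k = qform (Amat n a b) y z.
Proof. by rewrite qformE; apply: eq_bigr => k _; rewrite uuE. Qed.

Lemma phi_decomp y : phiN a b y = \sum_i ((b - 2 * a) / 2 * vv y i ^+ 2
   + a / 2 * (vv y i + vv y (ordS i)) ^+ 2 + Kf (b + 2 * a) (uu y i)
   + a / 2 * (tt y i - tt y (ordS i)) ^+ 2).
Proof.
rewrite /phiN.
have E1 : \sum_k ln (coshR (qform (Amat n a b) y (ebasis R k))) =
  \sum_k (uu y k * tt y k) - \sum_k Kf (b + 2 * a) (uu y k) - \sum_k ((b + 2 * a) / 2 * tt y k ^+ 2).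
  rewrite -sumrB -sumrB; apply: eq_bigr => k _; rewrite /Kf /tt /uu; ring.
have E2 : \sum_k uu y k * tt y k = qform (Amat n a b) y (\row_k tt y k).
  by rewrite -sum_ut; apply: eq_bigr => k _; rewrite mxE.
rewrite E1 E2 (qformA a b y y) (qformA a b y (\row_k tt y k)).
have H : \sum_i (a / 2 * ((vv y i ^+ 2 + tt y i ^+ 2) - (vv y (ordS i) ^+ 2 + tt y (ordS i) ^+ 2))) = 0.
  by rewrite -big_distrr /= sumrB (sumS (fun i => vv y i ^+ 2 + tt y i ^+ 2)) subrr mulr0.
transitivity (\sum_i ((b - 2 * a) / 2 * vv y i ^+ 2
   + a / 2 * (vv y i + vv y (ordS i)) ^+ 2 + Kf (b + 2 * a) (uu y i)
   + a / 2 * (tt y i - tt y (ordS i)) ^+ 2) + \sum_i (a / 2 * ((vv y i ^+ 2 + tt y i ^+ 2) - (vv y (ordS i) ^+ 2 + tt y (ordS i) ^+ 2)))); last by rewrite H addr0.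
rewrite big_distrl -!sumrB -big_split.
apply: eq_bigr => i _; rewrite !mxE /vv /=; by field.
Qed.

Lemma uu_const m k : uu (const_vec n m) k = (b + 2 * a) * m.
Proof.
rewrite /uu qformA.
under eq_bigr => i _ do rewrite /const_vec /ebasis !mxE.
rewrite !big_split /=.
rewrite (sumS (fun j => a * m * (j == k)%:R)).
rewrite !sum_deltaR; ring.
Qed.

Lemma phi_const m : m = tanhR ((b + 2 * a) * m) ->
  phiN a b (const_vec n m) = \sum_(i < n) Kf (b + 2 * a) ((b + 2 * a) * m).
Proof.
move=> hm; rewrite phi_decomp; apply: eq_bigr => i _.
have ht : forall k, tt (const_vec n m) k = m by move=> k; rewrite /tt uu_const -hm.
have hv : forall k, vv (const_vec n m) k = 0 by move=> k; rewrite /vv ht /const_vec mxE subrr.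
by rewrite !hv !ht uu_const subrr; ring.
Qed.
End M.

Lemma iter_ordS n p (k : 'I_n) : val (iter p (@ordS n) k) = ((k + p) %% n)%N.
Proof.
elim: p => [|p IH] /=; first by rewrite addn0 modn_small.
by rewrite IH -addn1 modnDml -addnA addn1.
Qed.

Lemma cycle_sw n (P : 'I_n -> bool) k j : P k -> ~~ P j -> exists i, P i && ~~ P (ordS i).
Proof.
move=> Pk nPj; apply/not_existsP => H.
have step : forall i, P i -> P (ordS i).
  move=> i Pi; have := H i; rewrite Pi /=; by case: (P (ordS i)) => // /(_ isT).
have all_it : forall p, P (iter p (@ordS n) k).
  by elim=> [|p IH] //=; apply: step.
have E : iter (j + n - k) (@ordS n) k = j.
  apply: val_inj; rewrite iter_ordS.
  have kn := ltn_ord k; have jn := ltn_ord j.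
  rewrite addnBA; last by apply: leq_trans (ltnW kn) (leq_addl _ _).
  rewrite addKn.
  by rewrite modnDr modn_small.
by move: (all_it (j + n - k)%N); rewrite E (negbTE nPj).
Qed.

Section Core.
Variable R : realType.

Lemma tanh_abs (w : R) : tanhR `|w| = `|tanhR w|.
Proof.
case: (lerP 0 w) => w0.
  by rewrite !ger0_norm // tanh_ge0.
rewrite !ltr0_norm //; first by rewrite tanhN.
have : 0 < tanhR (- w) by rewrite -tanh0; apply: tanh_incr; rewrite oppr_gt0.
rewrite tanhN oppr_gt0 //.
Qed.

Lemma tanh_far (w ws m d : R) : tanhR ws = m -> d <= `|tanhR w - m| -> d <= `|tanhR w + m| ->
  d <= `| `|w| - ws|.
Proof.
move=> hs h1 h2; apply: le_trans (tanh_lip _ _); rewrite tanh_abs hs.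
case: (lerP 0 (tanhR w)) => t0; first by rewrite (ger0_norm t0).
by rewrite (ltr0_norm t0) -opprD normrN.
Qed.

Lemma sum_ge n (F : 'I_n -> R) i0 : (forall i, 0 <= F i) -> F i0 <= \sum_i F i.
Proof.
move=> H; rewrite (bigD1 i0) //= lerDl; apply: sumr_ge0 => i _; exact: H.
Qed.

Lemma sq_ge (d x : R) : 0 <= d -> d <= `|x| -> d ^+ 2 <= x ^+ 2.
Proof. move=> d0 h; rewrite -[x ^+ 2]real_normK ?num_real // !expr2; exact: ler_pM. Qed.

Lemma sum_key n (F : 'I_n -> R) K rho : (forall i, K <= F i) ->
  (exists i0, K + rho <= F i0) -> \sum_(i < n) K + rho <= \sum_i F i.
Proof.
move=> H [i0 h]; rewrite (bigD1 i0) //= [X in _ <= X](bigD1 i0) //= addrAC.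
apply: lerD => //; apply: ler_sum => i _; exact: H.
Qed.

Lemma core (a b m r : R) : 0 < 2 * a -> 2 * a < b -> 1 < b + 2 * a ->
  m = tanhR ((b + 2 * a) * m) -> 0 < r -> r < m ->
  exists2 rho : R, 0 < rho & forall n (y : 'rV[R]_n),
   (exists i, ~ (m - r <= y 0 i <= m + r)) -> (exists i, ~ (- m - r <= y 0 i <= - m + r)) ->
   phiN a b (const_vec n m) + rho <= phiN a b y.
Proof.
move=> a0 ab b1 hm r0 rm.
set b' := b + 2 * a.
set ws := b' * m.
have m0 : 0 < m by apply: lt_trans rm.
have hs : tanhR ws = m by rewrite /ws -hm.
have gs : gf b' ws = 0 by rewrite /gf hs /ws subrr.
set d := r / 2.
have d0 : 0 < d by rewrite /d; lra.
have dws : d < ws by rewrite /ws /d /b'; nra.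
have b'0 : 0 < b' by rewrite /b'; lra.
have [del del0 Hdel] := K_gap b'0 gs d0 dws.
have ws0 : 0 < ws by apply: lt_trans dws.
set c1 := (b - 2 * a) / 2 * d ^+ 2.
set c3 := a / 2 * (2 * m - 2 * d) ^+ 2.
have c10 : 0 < c1 by rewrite /c1; apply: mulr_gt0; [lra | exact: exprn_gt0].
have c30 : 0 < c3 by rewrite /c3; apply: mulr_gt0; [lra | apply: exprn_gt0; rewrite /d; lra].
exists (Num.min (Num.min c1 del) c3).
  by rewrite !lt_min c10 del0 c30.
move=> n y [j hj] [k hk].
rewrite phi_const // phi_decomp -/b' -/ws.
apply: sum_key.
  move=> i.
  have := K_min (uu a b y i) b'0 gs ws0.
  have := sqr_ge0 (vv a b y i); have := sqr_ge0 (vv a b y i + vv a b y (ordS i)).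
  have := sqr_ge0 (tt a b y i - tt a b y (ordS i)).
  have : 0 < b - 2 * a by lra.
  nra.
have rc1 : Num.min (Num.min c1 del) c3 <= c1 by rewrite !ge_min lexx.
have rdel : Num.min (Num.min c1 del) c3 <= del by rewrite !ge_min lexx orbT.
have rc3 : Num.min (Num.min c1 del) c3 <= c3 by rewrite !ge_min lexx orbT.
set rho := Num.min (Num.min c1 del) c3 in rc1 rdel rc3 *.
have cab : 0 < b - 2 * a by lra.
case: (pselect (exists i, d <= `|vv a b y i|)) => [[i hi]|nA].
  exists i.
  have := K_min (uu a b y i) b'0 gs ws0.
  have := sq_ge (ltW d0) hi.
  have := sqr_ge0 (vv a b y i + vv a b y (ordS i)).
  have := sqr_ge0 (tt a b y i - tt a b y (ordS i)).
  rewrite /c1 in rc1; nra.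
have hv : forall i, `|vv a b y i| < d.
  by move=> i; rewrite ltNge; apply/negP => h; apply: nA; exists i.
case: (pselect (exists i, d <= `|tt a b y i - m| /\ d <= `|tt a b y i + m|)) => [[i [h1 h2]]|nB].
  exists i.
  have := Hdel (uu a b y i) (tanh_far hs h1 h2).
  have := sqr_ge0 (vv a b y i); have := sqr_ge0 (vv a b y i + vv a b y (ordS i)).
  have := sqr_ge0 (tt a b y i - tt a b y (ordS i)).
  nra.
have hB : forall i, `|tt a b y i - m| < d \/ `|tt a b y i + m| < d.
  move=> i; case: (boolP (`|tt a b y i - m| < d)) => [h|]; first by left.
  rewrite -leNgt => h1; right; rewrite ltNge; apply/negP => h2; by apply: nB; exists i; split.
pose P i := `|tt a b y i - m| < d.
have nPj : ~~ P j.
  apply/negP; rewrite /P => h; apply: hj; move: h (hv j); rewrite /vv !ltr_norml => /andP[h1 h2] /andP[h3 h4].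
  apply/andP; split; rewrite /d in h1 h2 h3 h4; lra.
have Pk : P k.
  rewrite /P; case: (hB k) => // h; apply: contra_notT hk => _.
  move: h (hv k); rewrite /vv !ltr_norml => /andP[h1 h2] /andP[h3 h4].
  apply/andP; split; rewrite /d in h1 h2 h3 h4; lra.
have [i /andP[Pi nPi]] := cycle_sw Pk nPj.
have hsi : `|tt a b y (ordS i) + m| < d.
  by case: (hB (ordS i)) => // h; move: nPi; rewrite /P h.
exists i.
move: Pi hsi; rewrite /P !ltr_norml => /andP[h1 h2] /andP[h3 h4].
have := K_min (uu a b y i) b'0 gs ws0.
have := sqr_ge0 (vv a b y i); have := sqr_ge0 (vv a b y i + vv a b y (ordS i)).
have : (2 * m - 2 * d) ^+ 2 <= (tt a b y i - tt a b y (ordS i)) ^+ 2.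
  rewrite /d in h1 h2 h3 h4 *; rewrite !expr2; apply: ler_pM; lra.
rewrite /c3 in rc3; nra.
Qed.

Lemma cube_neg n (c l lo hi : R) (x : 'rV[R]_n) : 0 < c -> c * l = 1 ->
  ~ in_cube (c * lo) (c * hi) x -> exists i, ~ (lo <= (l *: x) 0 i <= hi).
Proof.
move=> c0 cl hc; apply/existsNP => H; apply: hc => i.
have /andP[h1 h2] := H i; rewrite mxE in h1 h2.
have e : x 0 i = c * (l * x 0 i) by rewrite mulrA cl mul1r.
by rewrite e !ler_pM2l // h1 h2.
Qed.

Lemma delta_ok (N n : nat) (Rad m r : R) (x : 'rV[R]_n) :
  DeltaNr N Rad m r x ->
  (exists i, ~ (m - r <= (Num.sqrt (n%:R / N%:R) *: x) 0 i <= m + r)) /\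
  (exists i, ~ (- m - r <= (Num.sqrt (n%:R / N%:R) *: x) 0 i <= - m + r)).
Proof.
rewrite /DeltaNr /in_ball => -[hb hc].
case: n x hb hc => [|n] x hb hc.
  by exfalso; apply: hc; left => -[].
case: N hb hc => [|N] hb hc.
  exfalso; apply: hc; left => i.
  rewrite sqrtr0 mulr0 in hb.
  have hS : \sum_(i < n.+1) x 0 i ^+ 2 <= 0.
    by rewrite -sqrtr_eq0 eq_le hb sqrtr_ge0.
  have hi : x 0 i ^+ 2 <= 0.
    apply: le_trans hS; rewrite (bigD1 i) //= lerDl; apply: sumr_ge0 => j _; exact: sqr_ge0.
  have xi0 : x 0 i = 0.
    by apply/eqP; rewrite -sqrf_eq0 eq_le hi sqr_ge0.
  by rewrite xi0 mul0r sqrtr0 !mul0r lexx.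
pose c : R := Num.sqrt (N.+1%:R / n.+1%:R).
pose l : R := Num.sqrt (n.+1%:R / N.+1%:R).
have c0 : 0 < c by rewrite sqrtr_gt0 divr_gt0 // ltr0n.
have cl : c * l = 1.
  rewrite /c /l -sqrtrM; last by rewrite divr_ge0 // ler0n.
  rewrite mulrA divfK ?pnatr_eq0 // mulfV ?pnatr_eq0 //; exact: sqrtr1.
move/not_orP: hc => [h1 h2]; split; exact: cube_neg c0 cl _.
Qed.

Lemma final (alpha beta : R) (s : nat -> nat) (Rad m r : R) :
  0 < 2 * alpha -> 2 * alpha < beta -> 1 < beta + 2 * alpha ->
  is_mstar alpha beta m -> 0 < r -> r < m ->
  exists rho : R, 0 < rho /\
    forall (N : nat) (x : 'rV[R]_(s N)),
      DeltaNr N Rad m r x ->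
      phiN alpha beta (const_vec (s N) m) + rho
        <= phiN alpha beta (Num.sqrt ((s N)%:R / N%:R) *: x).
Proof.
move=> a0 ab b1 [hm _] r0 rm.
have [rho rho0 H] := core a0 ab b1 hm r0 rm.
exists rho; split => // N x hD.
have [h1 h2] := delta_ok hD.
exact: H.
Qed.
End Core.

Unset Implicit Arguments.
Set Strict Implicit.

Theorem lemma7p10 (R : realType) (alpha beta : R) (s : nat -> nat) (Rad m r : R) :
  0 < 2 * alpha -> 2 * alpha < beta -> 1 < beta + 2 * alpha ->
  (* s_N = o(sqrt N / log N) *)
  (forall eps : R, 0 < eps -> exists N0 : nat, forall N : nat, (N0 <= N)%N ->
     (s N)%:R <= eps * (Num.sqrt N%:R / ln N%:R)) ->
  is_mstar alpha beta m ->
  (* R > 2 lambda_max / lambda_min for every N *)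
  (forall (N : nat) (lmin lmax : R),
     is_min_eig (Amat (s N) alpha beta) lmin ->
     is_max_eig (Amat (s N) alpha beta) lmax -> 2 * lmax / lmin < Rad) ->
  0 < r -> r < m ->
  exists rho : R, 0 < rho /\
    forall (N : nat) (x : 'rV[R]_(s N)),
      DeltaNr N Rad m r x ->
      phiN alpha beta (const_vec (s N) m) + rho
        <= phiN alpha beta (Num.sqrt ((s N)%:R / N%:R) *: x).
Proof.
move=> a0 ab b1 _ hm _ r0 rm.
exact: (final s Rad a0 ab b1 hm r0 rm).
Qed.
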